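(* Let $\mathbf{k}$ be an arbitrary field and $\sigma\subset N_{\mathbb{Q}}$ a nonzero strongly convex polyhedral cone. Every nontrivial homogeneous LFIHD $\partial$ on $\mathbf{k}[\sigma^\vee\cap M]$ is of the following form: there are a Demazure root $e$ of $\sigma$ with distinguished ray $\rho$ and $\lambda\in\mathbf{k}^*$ such that for all $i\in\mathbb{N}$ and $m\in\sigma^\vee\cap M$, $\partial^{(i)}(\chi^m)=\lambda^i\binom{\langle m,\rho\rangle}{i}\chi^{m+ie}$ (with $\binom{a}{b}=0$ for $a<b$). Conversely, each such pair $(e,\lambda)$ defines a nontrivial homogeneous LFIHD of degree $e$.
   Context: An LFIHD on a $\mathbf{k}$-algebra $A$ is a sequence $(\partial^{(i)})_{i\in\mathbb{N}}$ of $\mathbf{k}$-linear maps with $\partial^{(0)}=\mathrm{id}$, the Leibniz rule $\partial^{(i)}(fg)=\sum_{j=0}^i\partial^{(j)}(f)\partial^{(i-j)}(g)$, local finiteness (for each $f$, $\partial^{(i)}(f)=0$ for $i\gg0$), and iterativity $\partial^{(i)}\circ\partial^{(j)}=\binom{i+j}{i}\partial^{(i+j)}$; it corresponds to a $\mathbb{G}_a$-action on $\operatorname{Spec}A$. It is trivial if all $\partial^{(i)}$, $i>0$, vanish. For $M$-graded $A$, it is homogeneous of degree $e\in M$ if $\partial^{(i)}(A_m)\subset A_{m+ie}$. A Demazure root of $\sigma$ is $e\in M$ with a ray $\rho$ of $\sigma$ (identified with its primitive vector) such that $\langle e,\rho\rangle=-1$ and $\langle e,\rho'\rangle\ge0$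 for all other rays $\rho'$; $\rho$ is the distinguished ray. *)

(* Defs.v *)
From HB Require Import structures.
From mathcomp Require Import all_boot all_order all_algebra.
Set Implicit Arguments. Unset Strict Implicit. Unset Printing Implicit Defensive.
Import Order.TTheory GRing.Theory Num.Theory.
Local Open Scope ring_scope.

(* M = N = Z^n, elements are integer row vectors; <m, r> is the standard pairing. *)
Definition pairing (n : nat) (m r : 'rV[int]_n) : int :=
  \sum_(j < n) m ord0 j * r ord0 j.

(* r is a primitive lattice vector (in particular r <> 0). *)
Definition primitive (n : nat) (r : 'rV[int]_n) : Prop :=
  forall (d : nat) (w : 'rV[int]_n), r = w *+ d -> d = 1%N.

(* v lies in the rational cone generated by gens: d v = sum c_g g with d > 0,
   c_g >= 0 integers (equivalently, v is a nonnegative rational combination). *)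
Definition in_cone (n : nat) (gens : seq 'rV[int]_n) (v : 'rV[int]_n) : Prop :=
  exists (d : nat) (c : 'rV[int]_n -> nat),
    (0 < d)%N /\ v *+ d = \sum_(g <- gens) g *+ c g.

(* [rays] is the list of primitive ray generators of a nonzero strongly convex
   rational polyhedral cone sigma = cone(rays) in N_Q: nonempty, duplicate free,
   primitive, each ray extremal (not in the cone of the others), and sigma is
   strongly convex (no nontrivial nonnegative relation among the rays). *)
Definition cone_rays (n : nat) (rays : seq 'rV[int]_n) : Prop :=
  [/\ uniq rays, rays != [::],
      forall r, r \in rays -> primitive r,
      forall r, r \in rays -> ~ in_cone (rem r rays) r
    & forall c : 'rV[int]_n -> nat,
        \sum_(g <- rays) g *+ c g = 0 -> forall g, g \in rays -> c g = 0%N].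

Definition dual_pt (n : nat) (rays : seq 'rV[int]_n) (m : 'rV[int]_n) : bool :=
  all (fun r => 0 <= pairing m r) rays.

Definition demazure_root (n : nat) (rays : seq 'rV[int]_n) (e rho : 'rV[int]_n) : Prop :=
  [/\ rho \in rays, pairing e rho = -1
    & forall r, r \in rays -> r != rho -> 0 <= pairing e r].

(* (A, chi) is the semigroup algebra k[sigma^vee \cap M]: chi m = chi^m for
   m in S := sigma^vee \cap M form a k-basis of A and chi is multiplicative. *)
Definition semigroup_algebra (k : fieldType) (A : comAlgType k) (n : nat)
    (rays : seq 'rV[int]_n) (chi : 'rV[int]_n -> A) : Prop :=
  [/\ chi 0 = 1,
      forall m m', dual_pt rays m -> dual_pt rays m' -> chi (m + m') = chi m * chi m',
      forall x : A, exists (s : seq 'rV[int]_n) (c : 'rV[int]_n -> k),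
        all (dual_pt rays) s /\ x = \sum_(m <- s) c m *: chi m
    & forall (s : seq 'rV[int]_n) (c : 'rV[int]_n -> k),
        uniq s -> all (dual_pt rays) s -> \sum_(m <- s) c m *: chi m = 0 ->
        forall m, m \in s -> c m = 0].

Definition LFIHD (k : fieldType) (A : comAlgType k) (D : nat -> A -> A) : Prop :=
  [/\ forall i (a : k) (x y : A), D i (a *: x + y) = a *: D i x + D i y,
      forall x, D 0%N x = x,
      forall i (f g : A), D i (f * g) = \sum_(j < i.+1) D j f * D (i - j)%N g,
      forall f, exists N : nat, forall i, (N <= i)%N -> D i f = 0
    & forall i j f, D i (D j f) = D (i + j)%N f *+ 'C(i + j, i)].

Definition nontrivial_HD (k : fieldType) (A : comAlgType k) (D : nat -> A -> A) : Prop :=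
  exists i f, (0 < i)%N /\ D i f != 0.

Definition graded_piece (k : fieldType) (A : comAlgType k) (n : nat)
    (rays : seq 'rV[int]_n) (chi : 'rV[int]_n -> A) (m : 'rV[int]_n) (x : A) : Prop :=
  if dual_pt rays m then exists c : k, x = c *: chi m else x = 0.

Definition homogeneous (k : fieldType) (A : comAlgType k) (n : nat)
    (rays : seq 'rV[int]_n) (chi : 'rV[int]_n -> A) (D : nat -> A -> A)
    (e : 'rV[int]_n) : Prop :=
  forall i m x, graded_piece rays chi m x -> graded_piece rays chi (m + e *+ i) (D i x).

(* Main.v *)
Require Import Defs.
From HB Require Import structures.
From mathcomp Require Import all_boot all_order all_algebra.
From mathcomp Require Import ring lra zify.
From Stdlib Require Import ClassicalEpsilon.
Set Implicit Arguments. Unset Strict Implicit. Unset Printing Implicit Defensive.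
Import Order.TTheory GRing.Theory Num.Theory.
Local Open Scope ring_scope.


Lemma interval_choice (P N : finType) (L : P -> rat) (R : N -> rat) :
  (forall p q, L p < R q) -> exists t, (forall p, L p < t) /\ (forall q, t < R q).
Proof.
move=> H.
have [lo [Hlo1 Hlo2]] : exists lo, (forall p, L p <= lo) /\ (forall q, lo < R q).
  case: (pickP (@predT P)) => [p0 _|P0].
    case: (@arg_maxP _ _ P p0 predT L isT) => p _ Hp.
    by exists (L p); split=> [p'|q]; [exact: Hp | exact: H].
  case: (pickP (@predT N)) => [q0 _|N0].
    case: (@arg_minP _ _ N q0 predT R isT) => q _ Hq.
    exists (R q - 1); split=> [p|q']; first by have := P0 p.
    have := Hq q' isT; lra.
  by exists 0; split=> [p|q]; [have := P0 p | have := N0 q].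
have [hi [Hhi1 Hhi2]] : exists hi, (lo < hi) /\ (forall q, hi <= R q).
  case: (pickP (@predT N)) => [q0 _|N0].
    case: (@arg_minP _ _ N q0 predT R isT) => q _ Hq.
    by exists (R q); split=> [|q']; [exact: Hlo2 | exact: Hq].
  by exists (lo + 1); split=> [|q]; [lra | have := N0 q].
exists ((lo + hi) / 2); split=> [p|q].
  have := Hlo1 p; lra.
have := Hhi2 q; lra.
Qed.

Lemma sum_fiber (I J : finType) (g : J -> I) (f : J -> int) (h : I -> int) :
  \sum_i (\sum_(x | g x == i) f x) * h i = \sum_x f x * h (g x).
Proof.
under eq_bigr do rewrite big_distrl big_mkcond /=.
rewrite exchange_big /=; apply: eq_bigr => x _.
rewrite -big_mkcond /=.
rewrite (eq_bigl (fun i => i == g x)); last by move=> i; rewrite eq_sym.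
by rewrite big_pred1_eq.
Qed.

Lemma gordan_fun (n : nat) : forall (I : finType) (v : I -> nat -> int),
  (forall c : I -> int, (forall i, 0 <= c i) ->
     (forall j, (j < n)%N -> \sum_i c i * v i j = 0) -> forall i, c i = 0) ->
  exists u : nat -> int, forall i, 0 < \sum_(j < n) u j * v i j.
Proof.
elim: n => [|n IH] I v H.
  exists (fun _ => 0) => i.
  have := H (fun _ => 1) (fun _ => ler01) (fun j (hj : (j < 0)%N) => False_ind _ (notF hj)) i.
  by move/eqP; rewrite oner_eq0.
pose Z := {i : I | v i n == 0}.
pose Pt := {i : I | 0 < v i n}.
pose Nt := {i : I | v i n < 0}.
pose w (x : (Z + Pt * Nt)%type) (j : nat) : int :=
  match x with
  | inl z => v (val z) j
  | inr pq => (- v (val pq.2) n) * v (val pq.1) j + v (val pq.1) n * v (val pq.2) j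
  end.
have Hw : forall c' : (Z + Pt * Nt)%type -> int, (forall x, 0 <= c' x) ->
    (forall j, (j < n)%N -> \sum_x c' x * w x j = 0) -> forall x, c' x = 0.
  move=> c' c'ge0 Hc'.
  pose c i := \sum_(z : Z | val z == i) c' (inl z)
            + \sum_(pq : Pt * Nt | val pq.1 == i) c' (inr pq) * (- v (val pq.2) n)
            + \sum_(pq : Pt * Nt | val pq.2 == i) c' (inr pq) * v (val pq.1) n.
  have posN (q : Nt) : 0 <= - v (val q) n by rewrite oppr_ge0 ltW // (valP q).
  have posP (p : Pt) : 0 <= v (val p) n by rewrite ltW // (valP p).
  have sposN (q : Nt) : 0 < - v (val q) n by rewrite oppr_gt0 (valP q).
  have sposP (p : Pt) : 0 < v (val p) n by exact: (valP p).
  have cge0 i : 0 <= c i.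
    rewrite /c; apply: addr_ge0; first apply: addr_ge0.
    - by apply: sumr_ge0.
    - by apply: sumr_ge0 => pq _; apply: mulr_ge0.
    - by apply: sumr_ge0 => pq _; apply: mulr_ge0.
  have ceq j : \sum_i c i * v i j = \sum_x c' x * w x j.
    rewrite /c.
    under eq_bigr do rewrite !mulrDl.
    rewrite !big_split /=.
    rewrite (sum_fiber (fun z : Z => val z) (fun z => c' (inl z)) (fun i => v i j)).
    rewrite (sum_fiber (fun pq : Pt * Nt => val pq.1)
       (fun pq => c' (inr pq) * (- v (val pq.2) n)) (fun i => v i j)).
    rewrite (sum_fiber (fun pq : Pt * Nt => val pq.2)
       (fun pq => c' (inr pq) * v (val pq.1) n) (fun i => v i j)).
    rewrite big_sumType /= -addrA -big_split /=; congr (_ + _).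
    by apply: eq_bigr => pq _; rewrite mulrDr !mulrA [c' _ * _ * _]mulrAC.
  have crel : forall j, (j < n.+1)%N -> \sum_i c i * v i j = 0.
    move=> j; rewrite ltnS leq_eqVlt => /orP [/eqP -> | hj]; last by rewrite ceq Hc'.
    rewrite ceq big_sumType /= [X in X + _]big1 ?add0r.
      by apply: big1 => pq _; rewrite mulNr [v (val pq.1) n * _]mulrC addNr mulr0.
    by move=> z _; rewrite (eqP (valP z)) mulr0.
  have c0 := H c cge0 crel.
  have split3 (x y z : int) : 0 <= x -> 0 <= y -> 0 <= z -> x + y + z = 0 ->
      [/\ x = 0, y = 0 & z = 0] by move=> *; split; lra.
  have s1 i : 0 <= \sum_(z : Z | val z == i) c' (inl z) by apply: sumr_ge0.
  have s2 i : 0 <= \sum_(pq : Pt * Nt | val pq.1 == i) c' (inr pq) * (- v (val pq.2) n).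
    by apply: sumr_ge0 => pq _; apply: mulr_ge0.
  have s3 i : 0 <= \sum_(pq : Pt * Nt | val pq.2 == i) c' (inr pq) * v (val pq.1) n.
    by apply: sumr_ge0 => pq _; apply: mulr_ge0.
  case=> [z | pq].
    have [Hs _ _] := split3 _ _ _ (s1 (val z)) (s2 (val z)) (s3 (val z)) (c0 (val z)).
    exact: (psumr_eq0P (P := fun z' : Z => val z' == val z)
      (F := fun z' => c' (inl z')) (fun _ _ => c'ge0 _) Hs (eqxx _)).
  have [_ Hs _] := split3 _ _ _ (s1 (val pq.1)) (s2 (val pq.1)) (s3 (val pq.1)) (c0 (val pq.1)).
  have := psumr_eq0P (P := fun pq' : Pt * Nt => val pq'.1 == val pq.1)
     (F := fun pq' => c' (inr pq') * (- v (val pq'.2) n)) _ Hs (eqxx _).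
  move=> /(_ (fun pq' _ => mulr_ge0 (c'ge0 _) (posN _))) /eqP.
  by rewrite mulf_eq0 (negbTE (lt0r_neq0 (sposN _))) orbF => /eqP.
case: (IH _ w Hw) => u' Hu'.
pose A i := \sum_(j < n) u' j * v i j.
have HZ (z : Z) : 0 < A (val z) by have := Hu' (inl z).
have HPN (p : Pt) (q : Nt) : 0 < (- v (val q) n) * A (val p) + v (val p) n * A (val q).
  have := Hu' (inr (p, q)); rewrite /A /= !big_distrr -big_split /=.
  by congr (0 < _); apply: eq_bigr => j _; rewrite mulrDr; congr (_ + _);
     rewrite !mulrA; congr (_ * _); rewrite mulrC.
pose L (p : Pt) : rat := - (A (val p))%:~R / (v (val p) n)%:~R.
pose R (q : Nt) : rat := (A (val q))%:~R / (- v (val q) n)%:~R.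
have [t [Ht1 Ht2]] : exists t, (forall p, L p < t) /\ (forall q, t < R q).
  apply: interval_choice => p q.
  have hp : (0 : rat) < (v (val p) n)%:~R by rewrite ltr0z; exact: (valP p).
  have hq : (0 : rat) < (- v (val q) n)%:~R by rewrite ltr0z oppr_gt0; exact: (valP q).
  rewrite /L /R ltr_pdivrMr // mulrAC ltr_pdivlMr //.
  have := HPN p q; rewrite -(ltr0z rat) rmorphD /= !rmorphM /=.
  rewrite !rmorphN /=; lra.
pose K := denq t.
pose a := numq t.
have Kpos : 0 < K by exact: denq_gt0.
have tE : t = a%:~R / K%:~R by rewrite /a /K divq_num_den.
exists (fun j => if (j < n)%N then K * u' j else a) => i.
rewrite big_ord_recr /= ltnn.
have -> : \sum_(j < n) (if (widen_ord (leqnSn n) j < n)%N then K * u' (widen_ord (leqnSn n) j) else a) * v i (widen_ord (leqnSn n) j) = K * A i.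
  by rewrite /A big_distrr; apply: eq_bigr => j _ /=; rewrite ltn_ord mulrA.
have Kq : (0 : rat) < K%:~R by rewrite ltr0z.
rewrite -(ltr0z rat) rmorphD /= !rmorphM /=.
have -> : (a%:~R : rat) = t * K%:~R by rewrite tE mulfVK // gt_eqF.
have -> : K%:~R * (A i)%:~R + t * K%:~R * (v i n)%:~R = K%:~R * ((A i)%:~R + t * (v i n)%:~R) :> rat by ring.
case: (ltrgtP (v i n) 0) => hv.
- have := Ht2 (exist _ i hv); rewrite /R.
  have hq : (0 : rat) < (- v i n)%:~R by rewrite ltr0z oppr_gt0.
  rewrite ltr_pdivlMr // rmorphN /= mulrN => h.
  rewrite mulr_gt0 //; lra.
- have := Ht1 (exist _ i hv); rewrite /L.
  have hp : (0 : rat) < (v i n)%:~R by rewrite ltr0z.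
  rewrite ltr_pdivrMr // => h.
  rewrite mulr_gt0 //; lra.
- rewrite hv mulr0 addr0 mulr_gt0 // ltr0z.
  by have := HZ (exist _ i (introT eqP hv)).
Qed.


Section Pairing.
Variable n : nat.
Implicit Types m r : 'rV[int]_n.

Lemma pairingDl m m' r : pairing (m + m') r = pairing m r + pairing m' r.
Proof. by rewrite /pairing -big_split; apply: eq_bigr => j _; rewrite mxE mulrDl. Qed.

Lemma pairingZl (a : int) m r : pairing (a *: m) r = a * pairing m r.
Proof. by rewrite /pairing big_distrr; apply: eq_bigr => j _ /=; rewrite !mxE mulrA. Qed.

Lemma pairingNl m r : pairing (- m) r = - pairing m r.
Proof. by rewrite /pairing -sumrN; apply: eq_bigr => j _; rewrite mxE mulNr. Qed.

Lemma pairingBl m m' r : pairing (m - m') r = pairing m r - pairing m' r.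
Proof. by rewrite pairingDl pairingNl. Qed.

Lemma pairing0l r : pairing 0 r = 0.
Proof. by rewrite /pairing big1 // => j _; rewrite mxE mul0r. Qed.

Lemma pairingMnl m r (N : nat) : pairing (m *+ N) r = pairing m r *+ N.
Proof.
elim: N => [|N IH]; first by rewrite !mulr0n pairing0l.
by rewrite !mulrS pairingDl IH.
Qed.

Lemma pairingNr m r : pairing m (- r) = - pairing m r.
Proof. by rewrite /pairing -sumrN; apply: eq_bigr => j _; rewrite mxE mulrN. Qed.

End Pairing.

Lemma sum_ind (T : eqType) (V : nmodType) (s : seq T) (f : T -> V) (x : T) :
  x \in s -> uniq s -> \sum_(g <- s) f g *+ (g == x) = f x.
Proof.
move=> xs us; rewrite (bigD1_seq x) //= eqxx mulr1n big1 ?addr0 //.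
by move=> g /negbTE ->.
Qed.

Lemma gordan_seq n (vs : seq 'rV[int]_n) : uniq vs ->
  (forall c : 'rV[int]_n -> nat, \sum_(g <- vs) g *+ c g = 0 ->
     forall g, g \in vs -> c g = 0%N) ->
  exists u : 'rV[int]_n, forall g, g \in vs -> 0 < pairing u g.
Proof.
move=> uvs H.
pose k := size vs.
pose v (i : 'I_k) (j : nat) : int :=
  if insub j is Some j' then (nth (0:'rV[int]_n) vs i) 0 j' else 0.
have Hv : forall c : 'I_k -> int, (forall i, 0 <= c i) ->
    (forall j, (j < n)%N -> \sum_i c i * v i j = 0) -> forall i, c i = 0.
  move=> c cge0 Hc.
  pose cn (g : 'rV[int]_n) : nat := absz (\sum_(i : 'I_k | nth (0:'rV[int]_n) vs i == g) c i).
  have cnE (i : 'I_k) : cn (nth (0:'rV[int]_n) vs i) = `|c i|%N.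
    rewrite /cn (eq_bigl (fun i' => i' == i)) ?big_pred1_eq //.
    by move=> i'; rewrite nth_uniq.
  have : \sum_(g <- vs) g *+ cn g = 0.
    rewrite (big_nth (0:'rV[int]_n)) big_mkord.
    apply/matrixP => a b; rewrite ord1 summxE [RHS]mxE.
    rewrite -[RHS](Hc b (ltn_ord b)); apply: eq_bigr => i _.
    by rewrite cnE -scaler_nat mxE natz gez0_abs // /v valK.
  move=> /H Hc0 i; apply/eqP; rewrite -absz_eq0; apply/eqP.
  by rewrite -cnE Hc0 // mem_nth.
have [u Hu] := gordan_fun Hv.
exists (\row_j u j) => g gin.
have := Hu (Ordinal (etrans (index_mem g vs) gin)).
congr (0 < _); rewrite /pairing; apply: eq_bigr => j _.
by rewrite mxE /v valK /= nth_index.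
Qed.

Lemma prim_neq0 n (r : 'rV[int]_n) : primitive r -> r != 0.
Proof. by move=> pr; apply/eqP=> r0; have := pr 0%N 0; rewrite r0 mulr0n => /(_ erefl). Qed.

Lemma geo_pos n (rays : seq 'rV[int]_n) : cone_rays rays ->
  exists u, forall g, g \in rays -> 0 < pairing u g.
Proof. by case=> ur _ _ _ sc; exact: gordan_seq ur sc. Qed.

Lemma geo_w n (rays : seq 'rV[int]_n) r : cone_rays rays -> r \in rays ->
  exists w, pairing w r = 0 /\ forall g, g \in rays -> g != r -> 0 < pairing w g.
Proof.
move=> cr rin; case: (cr) => ur _ prim ext sc.
have [u2 Hu2] := geo_pos cr.
have nr : -r \notin rays.
  apply/negP => nin.
  have := sc (fun g => ((g == r) + (g == -r))%N).
  under eq_bigr do rewrite mulrnDr.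
  rewrite big_split /= !sum_ind // addrN => /(_ erefl r rin).
  by rewrite eqxx.
have [u1 Hu1] : exists u1, forall g, g \in (-r :: rem r rays) -> 0 < pairing u1 g.
  apply: gordan_seq.
    by rewrite /= rem_uniq // andbT; apply: contra nr; exact: mem_rem.
  move=> c; rewrite big_cons => Hc.
  case Hcr: (c (-r)) => [|N].
    move: Hc; rewrite Hcr mulr0n add0r => HcRem.
    pose c2 g := if g == r then 0%N else c g.
    have : \sum_(g <- rays) g *+ c2 g = 0.
      rewrite (perm_big _ (perm_to_rem rin)) big_cons /= /c2 eqxx mulr0n add0r.
      rewrite -[RHS]HcRem; apply: eq_big_seq => g.
      by rewrite (mem_rem_uniq _ ur) => /andP [/negbTE -> _].
    move=> /sc Hc2 g; rewrite in_cons => /orP [/eqP -> // | gin].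
    have := Hc2 g (mem_rem gin); rewrite /c2.
    by move: gin; rewrite (mem_rem_uniq _ ur) => /andP [/negbTE -> _].
  exfalso; apply: (ext r rin); exists N.+1, c; split => //.
  by move: Hc; rewrite Hcr mulNrn addrC => /eqP; rewrite subr_eq0 => /eqP ->.
have p1r : pairing u1 r < 0.
  by have := Hu1 (-r) (mem_head _ _); rewrite pairingNr oppr_gt0.
exists ((- pairing u1 r) *: u2 + (pairing u2 r) *: u1); split.
  by rewrite pairingDl !pairingZl mulNr mulrC addNr.
move=> g gin gr; rewrite pairingDl !pairingZl.
apply: addr_gt0; apply: mulr_gt0; rewrite ?oppr_gt0 ?Hu2 //.
by apply: Hu1; rewrite in_cons (mem_rem_uniq _ ur) inE gr gin orbT.
Qed.

Lemma pairing_delta n (r : 'rV[int]_n) (j : 'I_n) : pairing (delta_mx 0 j) r = r 0 j.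
Proof.
rewrite /pairing (bigD1 j) //= mxE !eqxx mul1r big1 ?addr0 //.
by move=> j' /negbTE; rewrite mxE eq_sym => ->; rewrite andbF mul0r.
Qed.

Lemma prim_bezout n (r : 'rV[int]_n) : primitive r -> exists v, pairing v r = 1.
Proof.
move=> pr.
pose P (k : nat) : bool := (0 < k)%N &&
  (if excluded_middle_informative (exists v, pairing v r = k%:Z) then true else false).
have PE k : P k -> (0 < k)%N /\ exists v, pairing v r = k%:Z.
  by rewrite /P; case: excluded_middle_informative => // H /andP [].
have EP k v : (0 < k)%N -> pairing v r = k%:Z -> P k.
  by move=> kp e; rewrite /P kp; case: excluded_middle_informative => // H; exfalso; apply: H; exists v.
have exP : exists k, P k.
  case: (pickP (fun j => r 0 j != 0)) => [j rj | H].
    case: (ltrgtP (r 0 j) 0) => h; last by rewrite h eqxx in rj.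
      exists (absz (r 0 j)); apply: (EP _ (- delta_mx 0 j)); first by rewrite absz_gt0.
      by rewrite pairingNl pairing_delta ltz0_abs.
    exists (absz (r 0 j)); apply: (EP _ (delta_mx 0 j)); first by rewrite absz_gt0.
    by rewrite pairing_delta gtz0_abs.
  exfalso; move/negP: (prim_neq0 pr); apply; apply/eqP/matrixP => a b.
  by rewrite ord1 mxE; move: (H b) => /= /negbFE /eqP.
have [g Pg gmin] := ex_minnP exP.
have [gpos [v0 Hv0]] := PE _ Pg.
have dv j : (g%:Z %| r ord0 j)%Z.
  apply/dvdz_mod0P.
  set x := r ord0 j.
  have gnz : g%:Z != 0 by rewrite lt0r_neq0 // ltz_nat.
  have rge0 := modz_ge0 x gnz.
  have rlt : (x %% g%:Z)%Z < g%:Z by apply: ltz_pmod; rewrite ltz_nat.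
  have xe := divz_eq x g%:Z.
  apply/eqP; apply: contraT => nz.
  have rpos : 0 < (x %% g%:Z)%Z by rewrite lt_neqAle eq_sym nz rge0.
  have : P (absz (x %% g%:Z)%Z).
    apply: (EP _ (delta_mx 0 j - ((x %/ g%:Z)%Z) *: v0)); first by rewrite absz_gt0 lt0r_neq0.
    rewrite pairingBl pairingZl pairing_delta Hv0 gez0_abs; last exact: rge0.
    rewrite -/x; lia.
  move/gmin; rewrite -(lez_nat) gez0_abs; last exact: rge0.
  move=> h.
  by move: (lt_le_trans rlt h); rewrite ltxx.
have : r = (\row_j ((r ord0 j) %/ g%:Z)%Z) *+ g.
  apply/matrixP => a b; rewrite ord1 -scaler_nat mxE mxE natz mulrC divzK //.
move/pr => g1; exists v0; by rewrite Hv0 g1.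
Qed.

Lemma large n (rays : seq 'rV[int]_n) (rho x w : 'rV[int]_n) : uniq rays ->
  (forall g, g \in rays -> g != rho -> 0 < pairing w g) -> 0 <= pairing w rho ->
  0 <= pairing x rho -> exists N, dual_pt rays (x + w *+ N).
Proof.
move=> ur Hw wr xr.
exists (\sum_(g <- rays) `|pairing x g|)%N; apply/allP => g gin /=.
rewrite pairingDl pairingMnl -mulr_natr natz.
have hb : (`|pairing x g| <= \sum_(g <- rays) `|pairing x g|)%N.
  by rewrite (bigD1_seq g) //= leq_addr.
have hs : 0 <= (\sum_(g <- rays) `|pairing x g|)%N%:Z by [].
case: (g =P rho) => [->|/eqP ne].
  by apply: addr_ge0 => //; apply: mulr_ge0.
have := Hw g gin ne; move: hb hs.
set N := (\sum_(g <- rays) `|pairing x g|)%N; move=> hb hs hw.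
nia.
Qed.

Lemma ray_one n (rays : seq 'rV[int]_n) rho : cone_rays rays -> rho \in rays ->
  exists m1, dual_pt rays m1 /\ pairing m1 rho = 1.
Proof.
move=> cr rin; case: (cr) => ur _ prim _ _.
have [v Hv] := prim_bezout (prim _ rin).
have [w [Hw0 Hw]] := geo_w cr rin.
have [N HN] : exists N, dual_pt rays (v + w *+ N).
  by apply: (large ur Hw); rewrite ?Hw0 ?Hv.
exists (v + w *+ N); split => //.
by rewrite pairingDl pairingMnl Hw0 mul0rn addr0.
Qed.

Section FwdGeo.
Variables (n : nat) (rays : seq 'rV[int]_n) (e : 'rV[int]_n) (deg : 'rV[int]_n -> nat).
Hypothesis cr : cone_rays rays.
Hypothesis degD : forall m m', dual_pt rays m -> dual_pt rays m' -> deg (m + m') = (deg m + deg m')%N.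
Hypothesis degK : forall m, dual_pt rays m -> dual_pt rays (m + e *+ deg m) /\ deg (m + e *+ deg m) = 0%N.
Hypothesis deg_nt : exists m0, dual_pt rays m0 /\ (0 < deg m0)%N.

Lemma dual_ptD m m' : dual_pt rays m -> dual_pt rays m' -> dual_pt rays (m + m').
Proof.
move=> /allP h /allP h'; apply/allP => r rin /=.
by rewrite pairingDl addr_ge0 // ?h ?h'.
Qed.

Lemma dual_pt0 : dual_pt rays 0.
Proof. by apply/allP => r _ /=; rewrite pairing0l. Qed.

Lemma dual_ptMn m N : dual_pt rays m -> dual_pt rays (m *+ N).
Proof.
move=> h; elim: N => [|N IH]; first by rewrite mulr0n dual_pt0.
by rewrite mulrS dual_ptD.
Qed.

Lemma deg0 : deg 0 = 0%N.
Proof. by have := degD dual_pt0 dual_pt0; rewrite addr0 => /eqP; rewrite -{1}[deg 0]addn0 eqn_add2l => /eqP. Qed.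

Lemma degMn m N : dual_pt rays m -> deg (m *+ N) = (N * deg m)%N.
Proof.
move=> h; elim: N => [|N IH]; first by rewrite mulr0n deg0.
by rewrite mulrS degD ?dual_ptMn // IH mulSn.
Qed.

Lemma fwd_geo : exists rho, demazure_root rays e rho /\
  (forall m, dual_pt rays m -> pairing m rho = (deg m)%:Z).
Proof.
case: (cr) => ur _ prim _ _.
have [m0 [m0S m0p]] := deg_nt.
have [rho rin erho] : exists2 rho, rho \in rays & pairing e rho < 0.
  case: (boolP (has (fun r => pairing e r < 0) rays)) => [/hasP [r rin h]|/hasPn h].
    by exists r.
  have eS : dual_pt rays e.
    by apply/allP => r rin /=; have := h r rin; rewrite -leNgt.
  have [_ h0] := degK m0S.
  move: h0; rewrite degD ?dual_ptMn // degMn // => /eqP.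
  by rewrite addn_eq0 (negbTE (lt0n_neq0 m0p)).
have step2 m : dual_pt rays m -> pairing m rho = 0 -> deg m = 0%N.
  move=> mS mr; have [/allP xS _] := degK mS.
  have := xS rho rin; rewrite /= pairingDl pairingMnl mr add0r => h.
  apply/eqP; apply: contraT => dn.
  move: h; rewrite -mulr_natr natz => h1.
  have h3 : (0 < (deg m)%:Z) by rewrite ltz_nat lt0n.
  nia.
have [w [w0 wpos]] := geo_w cr rin.
have wS : dual_pt rays w.
  apply/allP => r rin' /=; case: (r =P rho) => [->|/eqP ne]; first by rewrite w0.
  exact: ltW (wpos r rin' ne).
have degw : deg w = 0%N by apply: step2.
have step3 m : dual_pt rays m -> deg m = 0%N -> pairing m rho = 0.
  move=> mS dm; apply/eqP; apply: contraT => mr; move: m0p; apply: contraLR => _.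
  rewrite -leqNgt leqn0.
  have mrp : 0 < pairing m rho.
    by rewrite lt_neqAle eq_sym mr /=; exact: (allP mS rho rin).
  suff H : forall y, dual_pt rays y -> deg y = 0%N by rewrite H.
  move=> y yS.
  pose N := absz (pairing y rho).
  have yr : 0 <= pairing y rho by exact: (allP yS rho rin).
  have [N' HN'] : exists N', dual_pt rays ((m *+ N - y) + w *+ N').
    apply: (large ur wpos); first by rewrite w0.
    rewrite pairingBl pairingMnl -mulr_natr natz /N gez0_abs //; nia.
  have := degD HN' yS.
  rewrite addrAC subrK degD ?dual_ptMn // !degMn // dm degw !muln0.
  by move=> /esym /eqP; rewrite addn_eq0 => /andP [_ /eqP].
have step4 m : dual_pt rays m -> pairing m rho = (deg m)%:Z * (- pairing e rho).
  move=> mS; have [xS x0] := degK mS.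
  have := step3 _ xS x0; rewrite pairingDl pairingMnl -mulr_natr natz.
  by move=> h; rewrite mulrN; apply/eqP; rewrite -addr_eq0 mulrC h.
have c1 : pairing e rho = -1.
  have [m1 [m1S m1r]] := ray_one cr rin.
  have := step4 _ m1S; rewrite m1r => h.
  have hc : 0 < - pairing e rho by rewrite oppr_gt0.
  have hd : 0 <= (deg m1)%:Z by [].
  move: h hc hd; generalize (pairing e rho) => c; generalize ((deg m1)%:Z) => d h hc hd.
  have hd1 : 1 <= d by nia.
  nia.
have step4' m : dual_pt rays m -> pairing m rho = (deg m)%:Z.
  by move=> mS; rewrite step4 // c1 opprK mulr1.
exists rho; split => //; split => // r rin' ne.
have [wr [wr0 wrpos]] := geo_w cr rin'.
have wrS : dual_pt rays wr.
  apply/allP => r' rin'' /=; case: (r' =P r) => [->|/eqP ne']; first by rewrite wr0.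
  exact: ltW (wrpos r' rin'' ne').
have wrr : 0 < pairing wr rho by apply: wrpos; rewrite // eq_sym.
have [/allP xS _] := degK wrS.
have := xS r rin'; rewrite /= pairingDl pairingMnl wr0 add0r -mulr_natr natz.
have := step4' _ wrS => h1 h2.
nia.
Qed.

End FwdGeo.


Section Basic.
Variables (k : fieldType) (n : nat) (rays : seq 'rV[int]_n) (A : comAlgType k)
  (chi : 'rV[int]_n -> A).
Hypothesis SA : semigroup_algebra rays chi.

Lemma scale_chi_eq0 m (a : k) : dual_pt rays m -> a *: chi m = 0 -> a = 0.
Proof.
case: SA => _ _ _ ind mS h.
have H := ind [:: m] (fun _ => a) isT; rewrite /= mS big_seq1 in H.
exact: H isT h m (mem_head _ _).
Qed.

Lemma chi_neq0 m : dual_pt rays m -> chi m != 0.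
Proof.
move=> mS; apply/eqP => h; have := @scale_chi_eq0 m 1 mS.
by rewrite scale1r h => /(_ erefl) /eqP; rewrite oner_eq0.
Qed.

Lemma scale_chi_inj m (a b : k) : dual_pt rays m -> a *: chi m = b *: chi m -> a = b.
Proof.
move=> mS h; apply/eqP; rewrite -subr_eq0; apply/eqP; apply: (scale_chi_eq0 mS).
by rewrite scalerBl h subrr.
Qed.

Variable D : nat -> A -> A.
Hypothesis HD : LFIHD D.

Lemma D0 i : D i 0 = 0.
Proof.
case: HD => lin _ _ _ _.
have := lin i 1 0 0; rewrite !scale1r addr0 => h.
by apply: (@addrI _ (D i 0)); rewrite -h addr0.
Qed.

Lemma DZ i a x : D i (a *: x) = a *: D i x.
Proof. by case: HD => lin _ _ _ _; have := lin i a x 0; rewrite !addr0 D0 addr0. Qed.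

Lemma DD i x y : D i (x + y) = D i x + D i y.
Proof. by case: HD => lin _ _ _ _; have := lin i 1 x y; rewrite !scale1r. Qed.

Lemma Dsum i (T : Type) (s : seq T) (c : T -> k) (f : T -> A) :
  D i (\sum_(m <- s) c m *: f m) = \sum_(m <- s) c m *: D i (f m).
Proof.
elim: s => [|x s IH]; first by rewrite !big_nil D0.
by rewrite !big_cons DD DZ IH.
Qed.

End Basic.

Section Fwd.
Variables (k : fieldType) (n : nat) (rays : seq 'rV[int]_n) (A : comAlgType k)
  (chi : 'rV[int]_n -> A).
Hypothesis cr : cone_rays rays.
Hypothesis SA : semigroup_algebra rays chi.
Variable D : nat -> A -> A.
Hypothesis HD : LFIHD D.
Variable e : 'rV[int]_n.
Hypothesis He : homogeneous rays chi D e.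

Notation S := (dual_pt rays).

Lemma coef_ex i m : exists c : k, (S m -> D i (chi m) = c *: chi (m + e *+ i)) /\
  (c != 0 -> S m /\ S (m + e *+ i)).
Proof.
case: (boolP (S m)) => mS; last by exists 0; split => //; rewrite eqxx.
have gp : graded_piece rays chi m (chi m) by rewrite /graded_piece mS; exists 1; rewrite scale1r.
have := He i gp; rewrite /graded_piece.
case: (boolP (S (m + e *+ i))) => h.
  by case=> c Hc; exists c.
by move=> H; exists 0; rewrite scale0r eqxx; split.
Qed.

Definition acoef i m : k := proj1_sig (constructive_indefinite_description _ (coef_ex i m)).

Lemma aE i m : S m -> D i (chi m) = acoef i m *: chi (m + e *+ i).
Proof. exact: (proj1 (proj2_sig (constructive_indefinite_description _ (coef_ex i m)))). Qed.

Lemma aS i m : acoef i m != 0 -> S m /\ S (m + e *+ i).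
Proof. exact: (proj2 (proj2_sig (constructive_indefinite_description _ (coef_ex i m)))). Qed.

Lemma aD0 i m : S m -> D i (chi m) = 0 -> acoef i m = 0.
Proof.
move=> mS h; apply/eqP; apply: contraT => nz.
have [_ h2] := aS nz.
by move: h; rewrite aE // => /(scale_chi_eq0 SA h2) /eqP; rewrite (negbTE nz).
Qed.

Lemma a0 m : S m -> acoef 0 m = 1.
Proof.
move=> mS; case: (HD) => _ h0 _ _ _.
have := aE 0 mS; rewrite h0 mulr0n addr0 => h.
by apply: esym; apply: (scale_chi_inj SA mS); rewrite scale1r.
Qed.

Lemma lf m : exists N, forall i, (N <= i)%N -> acoef i m = 0.
Proof.
case: (boolP (S m)) => mS; last first.
  by exists 0%N => i _; apply/eqP; apply: contraT => /aS [h _]; rewrite h in mS.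
case: (HD) => _ _ _ lfin _; have [N HN] := lfin (chi m).
by exists N => i hi; apply: aD0 => //; apply: HN.
Qed.

Definition bnd m : nat := proj1_sig (constructive_indefinite_description _ (lf m)).

Definition Fp m : {poly k} := \poly_(i < bnd m) acoef i m.

Lemma FpE m i : (Fp m)`_i = acoef i m.
Proof.
rewrite coef_poly; case: ifP => // /negbT; rewrite -leqNgt.
by move=> h; rewrite (proj2_sig (constructive_indefinite_description _ (lf m)) i h).
Qed.

Lemma leib i m m' : S m -> S m' ->
  acoef i (m + m') = \sum_(j < i.+1) acoef j m * acoef (i - j) m'.
Proof.
move=> mS m'S.
have mm'S := dual_ptD mS m'S.
have key : D i (chi (m + m')) =
    (\sum_(j < i.+1) acoef j m * acoef (i - j) m') *: chi (m + m' + e *+ i).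
  case: SA => _ mul _ _; case: (HD) => _ _ leibD _ _.
  rewrite mul // leibD scaler_suml; apply: eq_bigr => j _.
  rewrite !aE // -scalerAl -scalerAr scalerA.
  case: (eqVneq (acoef j m * acoef (i - j) m') 0) => [->|nz]; first by rewrite !scale0r.
  have [nz1 nz2] : acoef j m != 0 /\ acoef (i - j) m' != 0.
    by split; apply: contraNneq nz => ->; rewrite ?mul0r ?mulr0.
  have [_ h1] := aS nz1; have [_ h2] := aS nz2.
  rewrite -mul //; congr (_ *: chi _).
  rewrite addrACA -mulrnDr subnKC //; last by rewrite -ltnS ltn_ord.
case: (boolP (S (m + m' + e *+ i))) => h.
  by apply: (scale_chi_inj SA h); rewrite -key aE.
have -> : acoef i (m + m') = 0.
  by apply/eqP; apply: contraT => /aS [_ h']; rewrite h' in h.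
apply: esym; apply: big1 => j _; apply/eqP; apply: contraT => nz.
have [nz1 nz2] : acoef j m != 0 /\ acoef (i - j) m' != 0.
  by split; apply: contraNneq nz => ->; rewrite ?mul0r ?mulr0.
have [_ h1] := aS nz1; have [_ h2] := aS nz2.
have := dual_ptD h1 h2.
rewrite addrACA -mulrnDr subnKC; last by rewrite -ltnS ltn_ord.
by rewrite (negbTE h).
Qed.

Lemma FpM m m' : S m -> S m' -> Fp (m + m') = Fp m * Fp m'.
Proof.
move=> mS m'S; apply/polyP => i.
by rewrite coefM FpE leib //; apply: eq_bigr => j _; rewrite !FpE.
Qed.

Lemma Fp_neq0 m : S m -> Fp m != 0.
Proof.
move=> mS; apply/eqP => h; have := FpE m 0; rewrite h coef0 a0 // => /eqP.
by rewrite eq_sym oner_eq0.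
Qed.

Definition deg m := (size (Fp m)).-1.

Lemma size_Fp m : S m -> (0 < size (Fp m))%N.
Proof. by move=> mS; rewrite size_poly_gt0 Fp_neq0. Qed.

Lemma degD m m' : S m -> S m' -> deg (m + m') = (deg m + deg m')%N.
Proof.
move=> mS m'S; rewrite /deg FpM // size_mul ?Fp_neq0 //.
have h1 := size_Fp mS; have h2 := size_Fp m'S; move: h1 h2; case: (size (Fp m)) => // a _; case: (size (Fp m')) => // b _.
by rewrite addSn addnS.
Qed.

Lemma deg_lead m : S m -> acoef (deg m) m != 0.
Proof.
by move=> mS; rewrite -FpE -lead_coefE lead_coef_eq0 Fp_neq0.
Qed.

Lemma deg_gt m i : S m -> (deg m < i)%N -> acoef i m = 0.
Proof.
move=> mS hi; rewrite -FpE nth_default //.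
by move: (size_Fp mS) hi; rewrite /deg; case: (size (Fp m)).
Qed.

Lemma degK m : S m -> S (m + e *+ deg m) /\ deg (m + e *+ deg m) = 0%N.
Proof.
move=> mS; have [_ xS] := aS (deg_lead mS); split => //.
set x := m + e *+ deg m.
suff : (size (Fp x) <= 1)%N by rewrite /deg; case: (size _) => [|[]].
apply/leq_sizeP => i hi; rewrite FpE; apply/eqP; apply: contraT => nz.
have [_ h2] := aS nz.
case: (HD) => _ _ _ _ iter.
have := iter i (deg m) (chi m).
rewrite (aE (i + deg m) mS) (deg_gt (i := (i + deg m)%N) mS); last by lia.
rewrite scale0r mul0rn (aE _ mS) (DZ HD) (aE _ xS) scalerA => /(scale_chi_eq0 SA h2) /eqP.
by rewrite mulf_eq0 (negbTE (deg_lead mS)) (negbTE nz).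
Qed.

Lemma deg_nt : nontrivial_HD D -> exists m0, S m0 /\ (0 < deg m0)%N.
Proof.
case=> i [f [ip nz]].
case: SA => _ _ span _; have [s [c [sS fE]]] := span f.
case: (boolP (has (fun m => 0 < deg m)%N s)) => [/hasP [m ms h]|/hasPn h].
  by exists m; split => //; exact: (allP sS m ms).
move: nz; rewrite fE (Dsum HD) big1_seq ?eqxx // => m /= ms.
have mS := allP sS m ms.
rewrite (aE _ mS) (deg_gt (i := i) mS) ?scale0r ?scaler0 //.
by move: (h m ms); rewrite -leqNgt leqn0 => /eqP ->.
Qed.

Lemma deg0' : deg 0 = 0%N.
Proof.
have := degD (dual_pt0 rays) (dual_pt0 rays); rewrite addr0 => /eqP.
by rewrite -{1}[deg 0]addn0 eqn_add2l => /eqP.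
Qed.

Lemma Fp_deg0 x : S x -> deg x = 0%N -> Fp x = 1.
Proof.
move=> xS d0; apply/polyP => i; rewrite FpE coef1.
case: i => [|i]; first by rewrite a0.
by rewrite deg_gt // d0.
Qed.

Lemma FpMn m N : S m -> Fp (m *+ N) = Fp m ^+ N.
Proof.
move=> mS; elim: N => [|N IH]; first by rewrite mulr0n expr0 Fp_deg0 ?dual_pt0 ?deg0'.
by rewrite mulrS FpM ?dual_ptMn // IH exprS.
Qed.

Lemma coef_binom (lam : k) a i : ((1 + lam%:P * 'X) ^+ a)`_i = lam ^+ i * ('C(a, i))%:R.
Proof.
elim: a i => [|a IH] i.
  by rewrite expr0 coef1; case: i => [|i]; rewrite ?expr0 ?mul1r // bin0n mulr0.
rewrite exprS mulrDl mul1r coefD -mulrA coefCM coefXM IH.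
case: i => [|i]; first by rewrite !expr0 !bin0 mulr0 addr0.
rewrite /= IH binS natrD mulrDr exprS; ring.
Qed.

Theorem fwd_main : nontrivial_HD D -> exists e' rho (lam : k),
  [/\ demazure_root rays e' rho, lam != 0
    & forall (i : nat) (m : 'rV[int]_n), S m ->
        D i (chi m) = (lam ^+ i * ('C(absz (pairing m rho), i))%:R) *: chi (m + e' *+ i)].
Proof.
move=> H.
have dnt := deg_nt H.
have [rho [dr Hpr]] := fwd_geo cr degD degK dnt.
case: (dr) => rin _ _.
case: (cr) => ur _ _ _ _.
have [m1 [m1S m1r]] := ray_one cr rin.
have dm1 : deg m1 = 1%N by apply/eqP; rewrite -eqz_nat -Hpr // m1r.
set lam := acoef 1 m1.
have lamnz : lam != 0 by rewrite /lam -dm1 deg_lead.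
have Fm1 : Fp m1 = 1 + lam%:P * 'X.
  apply/polyP => i; rewrite FpE coefD coef1 coefCM coefX.
  case: i => [|[|i]]; first by rewrite a0 // mulr0 addr0.
    by rewrite mulr1 add0r.
  by rewrite deg_gt ?dm1 // mulr0 addr0.
have [w [w0 wpos]] := geo_w cr rin.
have wS : S w.
  apply/allP => r rin' /=; case: (r =P rho) => [->|/eqP ne]; first by rewrite w0.
  exact: ltW (wpos r rin' ne).
have dw : deg w = 0%N by apply/eqP; rewrite -eqz_nat -Hpr // w0.
exists e, rho, lam; split => // i m mS.
set a := deg m.
have [N HN] : exists N, S ((m1 *+ a - m) + w *+ N).
  apply: (large ur wpos); first by rewrite w0.
  by rewrite pairingBl pairingMnl m1r Hpr // /a -mulr_natr mul1r natz subrr.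
have dx : deg ((m1 *+ a - m) + w *+ N) = 0%N.
  apply/eqP; rewrite -eqz_nat -Hpr //.
  by rewrite pairingDl pairingBl !pairingMnl m1r w0 Hpr // /a mul0rn addr0 -mulr_natr mul1r natz subrr.
have Fm : Fp m = (1 + lam%:P * 'X) ^+ a.
  rewrite -[Fp m]mulr1 -[X in _ * X = _](Fp_deg0 HN dx) -FpM //.
  rewrite addrA [m + _]addrC subrK FpM ?dual_ptMn // !FpMn // Fm1.
  by rewrite Fp_deg0 // expr1n mulr1.
rewrite aE // -FpE Fm coef_binom; congr (_ *: _).
by rewrite Hpr.
Qed.

End Fwd.


Lemma rep_sum (k : fieldType) (V : lmodType k) (T : eqType) (s t : seq T)
    (c : T -> k) (f : T -> V) :
  uniq t -> {subset s <= t} ->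
  \sum_(m <- s) c m *: f m = \sum_(m <- t) (c m *+ count_mem m s) *: f m.
Proof.
move=> ut; elim: s => [|x s IH] sub.
  by rewrite big_nil big1 // => m _; rewrite mulr0n scale0r.
rewrite big_cons IH; last by move=> y ys; apply: sub; rewrite in_cons ys orbT.
rewrite [in RHS](eq_bigr (fun m => (c m *+ (x == m)) *: f m + (c m *+ count_mem m s) *: f m)); last first.
  by move=> m _ /=; rewrite mulrnDr scalerDl.
rewrite big_split /=; congr (_ + _).
rewrite (bigD1_seq x) ?sub ?mem_head //= eqxx mulr1n big1 ?addr0 //.
by move=> m /negbTE; rewrite eq_sym => ->; rewrite mulr0n scale0r.
Qed.

Lemma binom_rev (a i j : nat) : (j <= a)%N ->
  ('C(a, j) * 'C(a - j, i) = 'C(a, i + j) * 'C(i + j, i))%N.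
Proof.
move=> ja.
case: (leqP (i + j) a) => h; last first.
  rewrite (@bin_small (a - j) i); last by lia.
  by rewrite (@bin_small a (i + j)) // muln0 mul0n.
have f1 := bin_fact ja.
have f2 : ('C(a - j, i) * (i`! * (a - j - i)`!))%N = (a - j)`!.
  by apply: bin_fact; lia.
have f3 := bin_fact h.
have f4 : ('C(i + j, i) * (i`! * (i + j - i)`!))%N = (i + j)`! by apply: bin_fact; lia.
have e1 : (a - j - i = a - (i + j))%N by lia.
have e2 : (i + j - i = j)%N by lia.
rewrite e1 in f2; rewrite e2 in f4.
apply/eqP; rewrite -(eqn_pmul2r (fact_gt0 (a - (i + j))))
  -(eqn_pmul2r (fact_gt0 i)) -(eqn_pmul2r (fact_gt0 j)).
apply/eqP.
transitivity ('C(a, j) * (j`! * (a - j)`!))%N; last first.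
  rewrite f1 -f3 -f4; ring.
rewrite -f2; ring.
Qed.

Section Conv.
Variables (k : fieldType) (n : nat) (rays : seq 'rV[int]_n) (A : comAlgType k)
  (chi : 'rV[int]_n -> A).
Hypothesis cr : cone_rays rays.
Hypothesis SA : semigroup_algebra rays chi.
Variables (e rho : 'rV[int]_n) (lam : k).
Hypothesis dr : demazure_root rays e rho.
Hypothesis lamnz : lam != 0.

Notation S := (dual_pt rays).

Definition cf i m : k := lam ^+ i * ('C(absz (pairing m rho), i))%:R.

Definition T i m : A := if S m then cf i m *: chi (m + e *+ i) else 0.

Lemma Sshift m j : S m -> (j <= absz (pairing m rho))%N -> S (m + e *+ j).
Proof.
case: dr => rin erho epos mS hj; apply/allP => r rin' /=.
rewrite pairingDl pairingMnl -mulr_natr natz.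
have := allP mS r rin' => /= h.
case: (r =P rho) => [->|/eqP ne].
  rewrite erho; have h2 := allP mS rho rin; rewrite /= in h2; move: hj; rewrite -(lez_nat) gez0_abs //; lia.
by have := epos r rin' ne => h'; nia.
Qed.

Lemma pair_shift m j : S m -> pairing (m + e *+ j) rho = pairing m rho - j%:Z.
Proof.
case: dr => rin erho _ mS.
by rewrite pairingDl pairingMnl erho -mulr_natr natz mulN1r.
Qed.

Lemma absz_shift m j : S m -> (j <= absz (pairing m rho))%N ->
  absz (pairing (m + e *+ j) rho) = (absz (pairing m rho) - j)%N.
Proof.
case: dr => rin _ _ mS hj; rewrite pair_shift //.
have h := allP mS rho rin; rewrite /= in h.
move: hj; rewrite -lez_nat gez0_abs // => hj.
apply/eqP; rewrite -eqz_nat gez0_abs; last by rewrite subr_ge0.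
by rewrite -subzn ?gez0_abs // -lez_nat gez0_abs.
Qed.

Lemma T_zero i m : S m -> (absz (pairing m rho) < i)%N -> T i m = 0.
Proof. by move=> mS h; rewrite /T mS /cf bin_small // mulr0 scale0r. Qed.

Lemma TD i m m' : S m -> S m' ->
  T i (m + m') = \sum_(j < i.+1) T j m * T (i - j) m'.
Proof.
case: dr => rin _ _ mS m'S.
have mm'S := dual_ptD mS m'S.
case: (SA) => _ mul _ _.
have ha := allP mS rho rin; have hb := allP m'S rho rin; rewrite /= in ha hb.
set a := absz (pairing m rho); set b := absz (pairing m' rho).
have hab : absz (pairing (m + m') rho) = (a + b)%N.
  apply/eqP; rewrite -eqz_nat pairingDl gez0_abs ?addr_ge0 // PoszD /a /b !gez0_abs //.
rewrite /T mm'S mS m'S /cf hab.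
have -> : \sum_(j < i.+1)
    (lam ^+ j * ('C(a, j))%:R) *: chi (m + e *+ j) * ((lam ^+ (i - j) * ('C(b, i - j))%:R) *: chi (m' + e *+ (i - j)))
  = \sum_(j < i.+1) (lam ^+ i * ('C(a, j) * 'C(b, i - j))%:R) *: chi (m + m' + e *+ i).
  apply: eq_bigr => j _.
  rewrite -scalerAl -scalerAr scalerA.
  have ji : (j <= i)%N by rewrite -ltnS ltn_ord.
  have -> : lam ^+ j * ('C(a, j))%:R * (lam ^+ (i - j) * ('C(b, i - j))%:R)
          = lam ^+ i * ('C(a, j) * 'C(b, i - j))%:R.
    by rewrite natrM mulrACA -exprD subnKC.
  case: (leqP j a) => hj; last by rewrite bin_small // mul0n mulr0 !scale0r.
  case: (leqP (i - j) b) => hij; last by rewrite (bin_small hij) muln0 mulr0 !scale0r.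
  rewrite -mul ?Sshift //; congr (_ *: chi _).
  by rewrite addrACA -mulrnDr subnKC.
by rewrite -scaler_suml -mulr_sumr -natr_sum binomial.Vandermonde.
Qed.

Lemma T0 m : S m -> T 0 m = chi m.
Proof. by move=> mS; rewrite /T mS /cf expr0 bin0 mul1r scale1r mulr0n addr0. Qed.

Lemma Titer i j m : S m ->
  (if S (m + e *+ j) then cf j m *: T i (m + e *+ j) else 0) = T (i + j) m *+ 'C(i + j, i).
Proof.
move=> mS; set a := absz (pairing m rho).
case: (leqP j a) => hj; last first.
  have -> : T (i + j) m = 0 by apply: T_zero => //; apply: (leq_trans hj); rewrite leq_addl.
  rewrite mul0rn.
  by case: ifP => // _; rewrite /cf bin_small // mulr0 scale0r.
have xS := Sshift mS hj; rewrite xS /T xS mS /cf absz_shift // -/a.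
rewrite scalerA -addrA -mulrnDr [(j + i)%N]addnC scalerMnl; congr (_ *: _).
have hbk : ('C(a, j)%:R * 'C(a - j, i)%:R : k) = 'C(a, i + j)%:R * 'C(i + j, i)%:R.
  by rewrite -!natrM binom_rev.
rewrite -[X in _ = X]mulr_natr exprD.
transitivity (lam ^+ j * lam ^+ i * ('C(a, j)%:R * 'C(a - j, i)%:R)); first by ring.
rewrite hbk; ring.
Qed.

Lemma rep_ex (x : A) : exists sc : seq 'rV[int]_n * ('rV[int]_n -> k),
  all S sc.1 /\ x = \sum_(m <- sc.1) sc.2 m *: chi m.
Proof. by case: SA => _ _ span _; have [s [c [h1 h2]]] := span x; exists (s, c). Qed.

Definition rep x := proj1_sig (constructive_indefinite_description _ (rep_ex x)).

Lemma repS x : all S (rep x).1.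
Proof. exact: (proj1 (proj2_sig (constructive_indefinite_description _ (rep_ex x)))). Qed.

Lemma repE x : x = \sum_(m <- (rep x).1) (rep x).2 m *: chi m.
Proof. exact: (proj2 (proj2_sig (constructive_indefinite_description _ (rep_ex x)))). Qed.

Lemma WD (s s' : seq 'rV[int]_n) (c c' : 'rV[int]_n -> k) (V : lmodType k) (f : 'rV[int]_n -> V) :
  all S s -> all S s' ->
  \sum_(m <- s) c m *: chi m = \sum_(m <- s') c' m *: chi m ->
  \sum_(m <- s) c m *: f m = \sum_(m <- s') c' m *: f m.
Proof.
move=> sS s'S h.
set t := undup (s ++ s').
have ut : uniq t := undup_uniq _.
have sub1 : {subset s <= t} by move=> x xs; rewrite mem_undup mem_cat xs.
have sub2 : {subset s' <= t} by move=> x xs; rewrite mem_undup mem_cat xs orbT.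
have tS : all S t by apply/allP => x; rewrite mem_undup mem_cat => /orP [] h';
  [exact: (allP sS) | exact: (allP s'S)].
rewrite (rep_sum _ _ ut sub1) (rep_sum _ _ ut sub2).
move: h; rewrite (rep_sum _ _ ut sub1) (rep_sum _ _ ut sub2) => /eqP.
rewrite -subr_eq0 -sumrB => /eqP h.
case: SA => _ _ _ ind.
have H := ind t (fun m => c m *+ count_mem m s - c' m *+ count_mem m s') ut tS.
have H' : \sum_(m <- t) (c m *+ count_mem m s - c' m *+ count_mem m s') *: chi m = 0.
  by rewrite -[RHS]h; apply: eq_bigr => m' _; rewrite scalerBl.
apply: eq_big_seq => m mt.
by move: (H H' m mt) => /eqP; rewrite subr_eq0 => /eqP ->.
Qed.

Definition Dc i x : A := \sum_(m <- (rep x).1) (rep x).2 m *: T i m.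

Lemma Dc_sum i (s : seq 'rV[int]_n) (c : 'rV[int]_n -> k) : all S s ->
  Dc i (\sum_(m <- s) c m *: chi m) = \sum_(m <- s) c m *: T i m.
Proof.
move=> sS; rewrite /Dc; apply: WD => //; first exact: repS.
by rewrite -repE.
Qed.

Lemma Dc_chi i m : S m -> Dc i (chi m) = T i m.
Proof.
move=> mS; have := Dc_sum i (s := [:: m]) (fun _ => 1); rewrite /= mS !big_seq1 !scale1r.
by apply.
Qed.

Lemma Dc_lin i (a : k) x y : Dc i (a *: x + y) = a *: Dc i x + Dc i y.
Proof.
set s1 := (rep x).1; set c1 := (rep x).2; set s2 := (rep y).1; set c2 := (rep y).2.
set t := undup (s1 ++ s2).
have ut : uniq t := undup_uniq _.
have sub1 : {subset s1 <= t} by move=> z zs; rewrite mem_undup mem_cat zs.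
have sub2 : {subset s2 <= t} by move=> z zs; rewrite mem_undup mem_cat zs orbT.
have tS : all S t.
  apply/allP => z; rewrite mem_undup mem_cat => /orP [] h.
    exact: (allP (repS x)).
  exact: (allP (repS y)).
pose C m := a * (c1 m *+ count_mem m s1) + c2 m *+ count_mem m s2.
have comb (V : lmodType k) (f : 'rV[int]_n -> V) :
    a *: \sum_(m <- s1) c1 m *: f m + \sum_(m <- s2) c2 m *: f m = \sum_(m <- t) C m *: f m.
  rewrite (rep_sum _ _ ut sub1) (rep_sum _ _ ut sub2) scaler_sumr -big_split /=.
  by apply: eq_bigr => m _; rewrite scalerA scalerDl.
have -> : a *: x + y = \sum_(m <- t) C m *: chi m by rewrite -comb -!repE.
by rewrite Dc_sum // -comb.
Qed.

Lemma Dc0 i : Dc i 0 = 0.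
Proof.
have := Dc_lin i 1 0 0; rewrite !scale1r addr0 => h.
by apply: (@addrI _ (Dc i 0)); rewrite -h addr0.
Qed.

Lemma Dc_scale i a x : Dc i (a *: x) = a *: Dc i x.
Proof. by have := Dc_lin i a x 0; rewrite !addr0 Dc0 addr0. Qed.

Lemma Dc_add i x y : Dc i (x + y) = Dc i x + Dc i y.
Proof. by have := Dc_lin i 1 x y; rewrite !scale1r. Qed.

Lemma Dc_bsum i (I : Type) (s : seq I) (F : I -> A) :
  Dc i (\sum_(x <- s) F x) = \sum_(x <- s) Dc i (F x).
Proof.
elim: s => [|x s IH]; first by rewrite !big_nil Dc0.
by rewrite !big_cons Dc_add IH.
Qed.

Lemma Dc_LFIHD : LFIHD Dc.
Proof.
split.
- exact: Dc_lin.
- move=> x; rewrite /Dc [in RHS](repE x); apply: eq_big_seq => m ms.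
  by rewrite T0 // (allP (repS x)).
- move=> i f g.
  set s1 := (rep f).1; set c1 := (rep f).2; set s2 := (rep g).1; set c2 := (rep g).2.
  have s1S := repS f; have s2S := repS g.
  case: (SA) => _ mul _ _.
  have -> : f * g = \sum_(m <- s1) \sum_(m' <- s2) (c1 m * c2 m') *: chi (m + m').
    rewrite {1}(repE f) {1}(repE g) mulr_suml; apply: eq_big_seq => m ms.
    rewrite mulr_sumr; apply: eq_big_seq => m' m's.
    by rewrite -scalerAl -scalerAr scalerA mul // ?(allP s1S m ms) ?(allP s2S m' m's).
  transitivity (\sum_(m <- s1) \sum_(m' <- s2) (c1 m * c2 m') *:
      \sum_(j < i.+1) T j m * T (i - j) m').
    rewrite Dc_bsum; apply: eq_big_seq => m ms; rewrite Dc_bsum.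
    apply: eq_big_seq => m' m's.
    have mS := allP s1S m ms; have m'S := allP s2S m' m's.
    by rewrite Dc_scale Dc_chi ?dual_ptD // TD.
  rewrite /Dc -/s1 -/c1 -/s2 -/c2.
  transitivity (\sum_(j < i.+1) \sum_(m <- s1) \sum_(m' <- s2)
      (c1 m * c2 m') *: (T j m * T (i - j) m')); last first.
    apply: eq_bigr => j _; rewrite mulr_suml; apply: eq_bigr => m _.
    rewrite mulr_sumr; apply: eq_bigr => m' _.
    by rewrite -scalerAl -scalerAr scalerA.
  rewrite [RHS]exchange_big; apply: eq_bigr => m _.
  rewrite [RHS]exchange_big; apply: eq_bigr => m' _.
  by rewrite scaler_sumr.
- move=> x; exists (\sum_(m <- (rep x).1) (absz (pairing m rho)).+1)%N => i hi.
  rewrite /Dc big1_seq // => m /= ms.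
  rewrite T_zero ?scaler0 ?(allP (repS x)) //.
  apply: leq_trans hi; rewrite (big_rem m ms) /=; exact: leq_addr.
- move=> i j f.
  have -> : Dc j f = \sum_(m <- (rep f).1) (rep f).2 m *: T j m by [].
  rewrite Dc_bsum [Dc (i + j) f]/Dc -sumrMnl; apply: eq_big_seq => m ms.
  have mS := allP (repS f) m ms.
  rewrite Dc_scale scalerMnr -Titer //; congr (_ *: _).
  rewrite /T mS Dc_scale; case: ifP => xS; first by rewrite Dc_chi.
  case: (leqP j (absz (pairing m rho))) => hj; first by rewrite Sshift in xS.
  by rewrite /cf bin_small // mulr0 scale0r.
Qed.

Lemma Dc_nt : nontrivial_HD Dc.
Proof.
case: dr => rin _ _.
have [m1 [m1S m1r]] := ray_one cr rin.
exists 1%N, (chi m1); split => //.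
rewrite Dc_chi // /T m1S /cf m1r /= bin1 mulr1 expr1.
apply/eqP => /(scale_chi_eq0 SA) h.
by move: lamnz; rewrite h ?eqxx //; apply: Sshift => //; rewrite m1r.
Qed.

Lemma Dc_hom : homogeneous rays chi Dc e.
Proof.
move=> i m x; rewrite /graded_piece.
case: (boolP (S m)) => mS.
  case=> c ->; rewrite Dc_scale Dc_chi // /T mS scalerA.
  case: ifP => xS; first by exists (c * cf i m).
  case: (leqP i (absz (pairing m rho))) => hi; first by rewrite Sshift in xS.
  by rewrite /cf bin_small // mulr0 mulr0 scale0r.
move=> ->; rewrite Dc0; case: ifP => // _; exists 0; by rewrite scale0r.
Qed.

Lemma Dc_formula i m : S m ->
  Dc i (chi m) = (lam ^+ i * ('C(absz (pairing m rho), i))%:R) *: chi (m + e *+ i).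
Proof. by move=> mS; rewrite Dc_chi // /T mS. Qed.

End Conv.

Unset Implicit Arguments.

Theorem theorem5p4p5 (k : fieldType) (n : nat) (rays : seq 'rV[int]_n)
    (A : comAlgType k) (chi : 'rV[int]_n -> A) :
  cone_rays rays -> semigroup_algebra rays chi ->
  (forall D : nat -> A -> A,
      LFIHD D -> nontrivial_HD D -> (exists e0, homogeneous rays chi D e0) ->
      exists (e rho : 'rV[int]_n) (lam : k),
        [/\ demazure_root rays e rho, lam != 0
          & forall (i : nat) (m : 'rV[int]_n), dual_pt rays m ->
              D i (chi m) = (lam ^+ i * ('C(absz (pairing m rho), i))%:R) *: chi (m + e *+ i)])
  /\
  (forall (e rho : 'rV[int]_n) (lam : k),
      demazure_root rays e rho -> lam != 0 ->
      exists D : nat -> A -> A,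
        [/\ LFIHD D, nontrivial_HD D, homogeneous rays chi D e
          & forall (i : nat) (m : 'rV[int]_n), dual_pt rays m ->
              D i (chi m) = (lam ^+ i * ('C(absz (pairing m rho), i))%:R) *: chi (m + e *+ i)]).
Proof.
move=> cr SA; split.
  by move=> D HD nt [e0 He]; exact: (fwd_main cr SA HD He nt).
move=> e rho lam dr lamnz.
exists (Dc SA e rho lam); split.
- exact: Dc_LFIHD.
- exact: Dc_nt.
- exact: Dc_hom.
- exact: Dc_formula.
Qed.
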